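(* Let $s$ be a fixed state, let $N\ge 1$, let $a_1(s),\dots,a_N(s)\in\mathbb{R}$ be centroids and $v_1(s),\dots,v_N(s)\in\mathbb{R}$ be values, and let $\beta>0$. Define, for $a\in\mathbb{R}$, $$\widehat Q_\beta(s,a)=\frac{\sum_{i=1}^N e^{-\beta|a-a_i(s)|}\,v_i(s)}{\sum_{i=1}^N e^{-\beta|a-a_i(s)|}}.$$ Then the supremum of $\widehat Q_\beta(s,\cdot)$ over the one-dimensional action space $\mathcal{A}=\mathbb{R}$ is attained at one of the centroids: $$\max_{a\in\mathbb{R}}\widehat Q_\beta(s,a)=\max_{i\in\{1,\dots,N\}}\widehat Q_\beta(s,a_i(s)).$$
   Context: A normalized (Gaussian) RBF value function, for a fixed state $s$, is a function of actions $a$ of the form $\widehat Q_\beta(s,a;\theta)=\frac{\sum_{i=1}^N e^{-\beta\|a-a_i(s;\theta)\|}v_i(s;\theta)}{\sum_{i=1}^N e^{-\beta\|a-a_i(s;\theta)\|}}$, where the centroids $a_i(s;\theta)$ and values $v_i(s;\theta)$ are outputs of a parametrized network (here treated as arbitrary fixed numbers for the fixed state $s$), and $\beta>0$ is a smoothing parameter. *)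

(* Defs.v *)
From Stdlib Require Import Reals.
Open Scope R_scope.

(* Centroids a_i and values v_i are indexed by i = 0, ..., N-1
   (functions nat -> R, only the first N entries matter).
   weight beta c x i = exp(-beta * |x - c i|). *)
Definition rbf_weight (beta : R) (c : nat -> R) (x : R) (i : nat) : R :=
  exp (- beta * Rabs (x - c i)).

Fixpoint fsum (N : nat) (f : nat -> R) : R :=
  match N with
  | O => 0
  | S n => fsum n f + f n
  end.

Definition Qhat (beta : R) (N : nat) (c v : nat -> R) (x : R) : R :=
  fsum N (fun i => rbf_weight beta c x i * v i) / fsum N (fun i => rbf_weight beta c x i).

(* Main.v *)
Require Import Defs.
From Stdlib Require Import Reals Lra Lia Classical.
Open Scope R_scope.

Lemma fsum_ext N f g : (forall i, (i < N)%nat -> f i = g i) -> fsum N f = fsum N g.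
Proof. induction N; simpl; intros H; auto. rewrite IHN by (intros; apply H; lia). rewrite H by lia. auto. Qed.

Lemma fsum_plus N f g : fsum N (fun i => f i + g i) = fsum N f + fsum N g.
Proof. induction N; simpl; [ring|]. rewrite IHN; ring. Qed.

Lemma fsum_scal N k f : fsum N (fun i => k * f i) = k * fsum N f.
Proof. induction N; simpl; [ring|]. rewrite IHN; ring. Qed.

Lemma fsum_pos N f : (1 <= N)%nat -> (forall i, 0 < f i) -> 0 < fsum N f.
Proof.
  induction N; simpl; intros H Hf; [lia|].
  destruct N. simpl. specialize (Hf 0%nat). lra.
  specialize (IHN ltac:(lia) Hf). specialize (Hf (S N)). lra.
Qed.

Lemma exp_le a b : a <= b -> exp a <= exp b.
Proof. intros [H|H]. left; apply exp_increasing; auto. subst; lra. Qed.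

Lemma argmaxP (P : nat -> Prop) (g : nat -> R) N :
  (exists j, (j < N)%nat /\ P j) ->
  exists i, (i < N)%nat /\ P i /\ forall j, (j < N)%nat -> P j -> g j <= g i.
Proof.
  induction N; intros [j [Hj Pj]]; [lia|].
  destruct (classic (exists j, (j < N)%nat /\ P j)) as [E|E].
  - destruct (IHN E) as [i [Hi [Pi Hm]]].
    destruct (classic (P N /\ g i <= g N)) as [[PN Hle]|HN].
    + exists N; repeat split; auto. intros k Hk Pk.
      destruct (Nat.eq_dec k N); [subst; lra|]. specialize (Hm k ltac:(lia) Pk); lra.
    + exists i; repeat split; auto. intros k Hk Pk.
      destruct (Nat.eq_dec k N); [subst|apply Hm; auto; lia].
      destruct (Rle_dec (g N) (g i)); auto. exfalso; apply HN; split; auto; lra.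
  - assert (j = N) by (destruct (Nat.eq_dec j N); auto; exfalso; apply E; exists j; split; auto; lia).
    subst. exists N; repeat split; auto. intros k Hk Pk.
    destruct (Nat.eq_dec k N); [subst; lra|]. exfalso; apply E; exists k; split; auto; lia.
Qed.

Section S.
Variables (N : nat) (c v : nat -> R) (beta : R).
Hypothesis hN : (1 <= N)%nat.
Hypothesis hbeta : 0 < beta.

Definition F (M y : R) := fsum N (fun i => rbf_weight beta c y i * (v i - M)).

Lemma Q_le_iff M y : Qhat beta N c v y <= M <-> F M y <= 0.
Proof.
  unfold F, Qhat.
  assert (E : fsum N (fun i => rbf_weight beta c y i * (v i - M)) =
     fsum N (fun i => rbf_weight beta c y i * v i) - M * fsum N (fun i => rbf_weight beta c y i)).
  { rewrite (fsum_ext N _ (fun i => rbf_weight beta c y i * v i + (- M) * rbf_weight beta c y i))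
      by (intros i _; cbv beta; ring).
    rewrite fsum_plus, fsum_scal. change (fun i : nat => rbf_weight beta c y i) with (rbf_weight beta c y). ring. }
  rewrite E.
  assert (B : 0 < fsum N (fun i => rbf_weight beta c y i)).
  { apply fsum_pos; auto. intros; apply exp_pos. }
  set (A := fsum N (fun i => rbf_weight beta c y i * v i)) in *.
  set (D := fsum N (fun i => rbf_weight beta c y i)) in *.
  split; intros H.
  - assert (A = (A / D) * D) by (field; lra).
    assert ((A/D)*D <= M * D) by (apply Rmult_le_compat_r; lra). lra.
  - assert (A / D = A * / D) by auto.
    assert (A * / D <= (M * D) * / D) by (apply Rmult_le_compat_r; [left; apply Rinv_0_lt_compat; lra| lra]).
    assert (M * D * / D = M) by (field; lra). lra.
Qed.

Lemma F_le0 M : (forall j, (j < N)%nat -> F M (c j) <= 0) -> forall x, F M x <= 0.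
Proof.
  intros Hc x.
  destruct (classic (exists j, (j < N)%nat /\ c j <= x)) as [El|El];
  [destruct (classic (exists j, (j < N)%nat /\ x <= c j)) as [Er|Er]|].
  - destruct (argmaxP (fun j => c j <= x) c N El) as [il [Hil [Pl Ml]]].
    destruct (argmaxP (fun j => x <= c j) (fun j => - c j) N Er) as [ir [Hir [Pr Mr]]].
    set (l := c il) in *. set (r := c ir) in *.
    assert (Hsplit : forall i, (i < N)%nat -> c i <= l \/ r <= c i).
    { intros i Hi. destruct (Rle_dec (c i) x).
      left; apply Ml; auto. right. specialize (Mr i Hi ltac:(lra)). lra. }
    set (a := fun i => if Rle_dec (c i) l then exp (beta * c i) * (v i - M) else 0).
    set (b := fun i => if Rle_dec (c i) l then 0 else exp (- beta * c i) * (v i - M)).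
    assert (G : forall y, l <= y <= r ->
      exp (beta * y) * F M y = fsum N a + fsum N b * exp (2 * beta * y)).
    { intros y Hy. unfold F. rewrite (Rmult_comm (fsum N b)), <- (fsum_scal N (exp (2*beta*y)) b),
        <- fsum_plus, <- fsum_scal.
      apply fsum_ext; intros i Hi. unfold a, b, rbf_weight.
      destruct (Rle_dec (c i) l) as [h|h].
      - rewrite Rabs_pos_eq by lra.
        replace (exp (beta * y) * (exp (- beta * (y - c i)) * (v i - M)))
          with (exp (beta * y + - beta * (y - c i)) * (v i - M)) by (rewrite exp_plus; ring).
        replace (beta * y + - beta * (y - c i)) with (beta * c i) by ring. ring.
      - destruct (Hsplit i Hi) as [h'|h']; [lra|].
        rewrite Rabs_left1 by lra.
        replace (exp (beta * y) * (exp (- beta * - (y - c i)) * (v i - M)))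
          with (exp (beta * y + - beta * - (y - c i)) * (v i - M)) by (rewrite exp_plus; ring).
        replace (exp (2 * beta * y) * (exp (- beta * c i) * (v i - M)))
          with (exp (- beta * c i + 2 * beta * y) * (v i - M)) by (rewrite exp_plus; ring).
        replace (beta * y + - beta * - (y - c i)) with (- beta * c i + 2 * beta * y) by ring. ring. }
    assert (lx : l <= x) by auto. assert (xr : x <= r) by auto.
    pose proof (G l ltac:(lra)) as Gl. pose proof (G r ltac:(lra)) as Gr. pose proof (G x ltac:(lra)) as Gx.
    pose proof (Hc il Hil) as Fl. pose proof (Hc ir Hir) as Fr. fold l in Fl. fold r in Fr.
    assert (exp (beta * l) * F M l <= 0) by (pose proof (exp_pos (beta*l)); nra).
    assert (exp (beta * r) * F M r <= 0) by (pose proof (exp_pos (beta*r)); nra).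
    assert (e1 : exp (2*beta*l) <= exp (2*beta*x)) by (apply exp_le; nra).
    assert (e2 : exp (2*beta*x) <= exp (2*beta*r)) by (apply exp_le; nra).
    assert (exp (beta * x) * F M x <= 0).
    { rewrite Gx. destruct (Rle_dec 0 (fsum N b)).
      - assert (fsum N b * exp (2*beta*x) <= fsum N b * exp (2*beta*r)) by (apply Rmult_le_compat_l; auto). lra.
      - assert (fsum N b * exp (2*beta*l) >= fsum N b * exp (2*beta*x)) by nra. lra. }
    pose proof (exp_pos (beta * x)). nra.
  -
    destruct (argmaxP (fun _ => True) c N ltac:(exists 0%nat; split; auto; lia)) as [m [Hm [_ Mm]]].
    assert (Hall : forall i, (i < N)%nat -> c i < x).
    { intros i Hi. destruct (Rlt_dec (c i) x); auto. exfalso; apply Er; exists i; split; auto; lra. }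
    assert (E : F M x = exp (beta * (c m - x)) * F M (c m)).
    { unfold F. rewrite <- fsum_scal. apply fsum_ext; intros i Hi. unfold rbf_weight.
      pose proof (Mm i Hi I). pose proof (Hall i Hi).
      rewrite !Rabs_pos_eq by lra.
      replace (exp (beta * (c m - x)) * (exp (- beta * (c m - c i)) * (v i - M)))
        with (exp (beta * (c m - x) + - beta * (c m - c i)) * (v i - M)) by (rewrite exp_plus; ring).
      f_equal; f_equal; ring. }
    rewrite E. pose proof (exp_pos (beta * (c m - x))). pose proof (Hc m Hm). nra.
  - destruct (argmaxP (fun _ => True) (fun j => - c j) N ltac:(exists 0%nat; split; auto; lia)) as [m [Hm [_ Mm]]].
    assert (Hall : forall i, (i < N)%nat -> x < c i).
    { intros i Hi. destruct (Rlt_dec x (c i)); auto. exfalso; apply El; exists i; split; auto; lra. }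
    assert (E : F M x = exp (beta * (x - c m)) * F M (c m)).
    { unfold F. rewrite <- fsum_scal. apply fsum_ext; intros i Hi. unfold rbf_weight.
      pose proof (Mm i Hi I). pose proof (Hall i Hi).
      rewrite !Rabs_left1 by lra.
      replace (exp (beta * (x - c m)) * (exp (- beta * - (c m - c i)) * (v i - M)))
        with (exp (beta * (x - c m) + - beta * - (c m - c i)) * (v i - M)) by (rewrite exp_plus; ring).
      f_equal; f_equal; ring. }
    rewrite E. pose proof (exp_pos (beta * (x - c m))). pose proof (Hc m Hm). nra.
Qed.
End S.

Theorem theorem1 (N : nat) (c v : nat -> R) (beta : R)
  (hN : (1 <= N)%nat) (hbeta : 0 < beta) :
  exists i : nat, (i < N)%nat /\
    (forall j : nat, (j < N)%nat -> Qhat beta N c v (c j) <= Qhat beta N c v (c i)) /\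
    (forall x : R, Qhat beta N c v x <= Qhat beta N c v (c i)).
Proof.
  destruct (argmaxP (fun _ => True) (fun j => Qhat beta N c v (c j)) N
     ltac:(exists 0%nat; split; auto; lia)) as [i [Hi [_ Mi]]].
  exists i; split; auto. split. intros j Hj; apply Mi; auto.
  intros x. apply Q_le_iff; auto.
  apply F_le0; auto. intros j Hj. apply Q_le_iff; auto.
Qed.
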